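(* For every nonzero integer $r$ and every integer $n\ge 0$, \[ \sum_{j=0}^{n}(-1)^{rj}L_{r(n-2j)}=\sum_{j=0}^{n}\left(\frac{L_r}{2}\right)^jL_{r(n-j)}=\frac{2F_{r(n+1)}}{F_r}. \]
   Context: $F_n$ and $L_n$ denote the Fibonacci and Lucas numbers, defined for all integers $n$ by $F_0=0,F_1=1$, $L_0=2,L_1=1$ and $x_n=x_{n-1}+x_{n-2}$; equivalently $F_n=(\alpha^n-\beta^n)/(\alpha-\beta)$, $L_n=\alpha^n+\beta^n$ with $\alpha=(1+\sqrt5)/2$, $\beta=(1-\sqrt5)/2$. In particular $F_{-n}=(-1)^{n-1}F_n$ and $L_{-n}=(-1)^nL_n$. *)

(* Defs.v *)
From mathcomp Require Import all_boot all_order all_algebra.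
Set Implicit Arguments. Unset Strict Implicit. Unset Printing Implicit Defensive.
Import Order.TTheory GRing.Theory Num.Theory.
Local Open Scope ring_scope.

Fixpoint fib_pair (n : nat) : int * int :=
  match n with
  | 0%N => (0, 1)
  | n'.+1 => let p := fib_pair n' in (p.2, p.1 + p.2)
  end.
Definition fibn (n : nat) : int := (fib_pair n).1.
Definition lucn (n : nat) : int := (if n is 0%N then 2 else fibn n.-1 + fibn n.+1).

(* Extension to all integer indices: F_{-n} = (-1)^(n-1) F_n, L_{-n} = (-1)^n L_n.
   Negz n denotes -(n+1). *)
Definition fibz (z : int) : int :=
  match z with
  | Posz n => fibn n
  | Negz n => (-1) ^+ n * fibn n.+1
  end.
Definition lucz (z : int) : int :=
  match z with
  | Posz n => lucn n
  | Negz n => (-1) ^+ n.+1 * lucn n.+1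
  end.

(* Main.v *)
Require Import Defs.
From mathcomp Require Import all_boot all_order all_algebra all_field.
From mathcomp Require Import ring.
Import Order.TTheory GRing.Theory Num.Theory.
Local Open Scope ring_scope.

Set Implicit Arguments.
Section Binet.
Variables (C : fieldType) (al be sq : C).
Hypotheses (Hs : al - be = sq) (Hs0 : sq != 0) (Hab : al * be = -1)
  (Ha2 : al ^+ 2 = al + 1) (Hb2 : be ^+ 2 = be + 1).

Lemma pair_binet n : ((fib_pair n).1%:~R * sq = al ^+ n - be ^+ n) /\
  ((fib_pair n).2%:~R * sq = al ^+ n.+1 - be ^+ n.+1).
Proof.
elim: n => [|n [IH1 IH2]] /=.
  by rewrite mul0r !expr0 subrr mul1r !expr1.
split => //.
rewrite intrD mulrDl IH1 IH2 (exprS al n.+1) (exprS be n.+1) !exprS.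
have -> : al * (al * al ^+ n) = al ^+ 2 * al ^+ n by rewrite mulrA expr2.
have -> : be * (be * be ^+ n) = be ^+ 2 * be ^+ n by rewrite mulrA expr2.
rewrite Ha2 Hb2; ring.
Qed.

Lemma fib_binet n : (fibn n)%:~R * sq = al ^+ n - be ^+ n.
Proof. by case: (pair_binet n). Qed.

Lemma luc_binet n : (lucn n)%:~R = al ^+ n + be ^+ n.
Proof.
case: n => [|n] /=; first by rewrite !expr0.
apply: (mulIf Hs0).
rewrite intrD mulrDl !fib_binet.
have ha : 1 + al ^+ 2 = al * sq by rewrite -Hs mulrBr Hab expr2; ring.
have hb : 1 + be ^+ 2 = - be * sq by rewrite -Hs mulNr mulrBr (mulrC be al) Hab expr2; ring.
have -> : al ^+ n.+2 = al ^+ n * al ^+ 2 by rewrite -exprD addn2.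
have -> : be ^+ n.+2 = be ^+ n * be ^+ 2 by rewrite -exprD addn2.
have e1 : al ^+ n.+1 = al ^+ n * al by rewrite exprSr.
have e2 : be ^+ n.+1 = be ^+ n * be by rewrite exprSr.
rewrite e1 e2.
transitivity (al ^+ n * (1 + al ^+ 2) - be ^+ n * (1 + be ^+ 2)); first ring.
rewrite ha hb; ring.
Qed.

Lemma al0 : al != 0.
Proof. apply/eqP => h; move: Hab; rewrite h mul0r => /eqP; rewrite eq_sym oppr_eq0 oner_eq0. by []. Qed.
Lemma be0 : be != 0.
Proof. apply/eqP => h; move: Hab; rewrite h mulr0 => /eqP; rewrite eq_sym oppr_eq0 oner_eq0. by []. Qed.

Lemma alinv : al^-1 = - be.
Proof. apply: (mulfI al0). rewrite mulfV ?al0 // mulrN Hab opprK. by []. Qed.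
Lemma beinv : be^-1 = - al.
Proof. apply: (mulfI be0). rewrite mulfV ?be0 // mulrN mulrC Hab opprK. by []. Qed.

Lemma lucz_binet z : (lucz z)%:~R = al ^ z + be ^ z.
Proof.
case: z => n; rewrite /lucz; first by rewrite luc_binet.
change (al ^ Negz n) with (al ^+ n.+1)^-1.
change (be ^ Negz n) with (be ^+ n.+1)^-1.
rewrite -!exprVn alinv beinv (exprNn be) (exprNn al) intrM rmorph_sign luc_binet; ring.
Qed.

Lemma fibz_binet z : (fibz z)%:~R * sq = al ^ z - be ^ z.
Proof.
case: z => n; rewrite /fibz; first by rewrite fib_binet.
change (al ^ Negz n) with (al ^+ n.+1)^-1.
change (be ^ Negz n) with (be ^+ n.+1)^-1.
rewrite -!exprVn alinv beinv (exprNn be) (exprNn al) intrM rmorph_sign -mulrA fib_binet !exprS; ring.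
Qed.
End Binet.

Section Sums.
Variables (F : fieldType) (A B : F).
Hypothesis (HAB : A - B != 0) (H2 : (2:F) != 0).

Lemma sumH n : (A - B) * \sum_(0 <= j < n.+1) A ^+ (n - j) * B ^+ j = A ^+ n.+1 - B ^+ n.+1.
Proof. by rewrite subrXX big_mkord. Qed.

Lemma sumH' n : (A - B) * \sum_(0 <= j < n.+1) B ^+ (n - j) * A ^+ j = A ^+ n.+1 - B ^+ n.+1.
Proof.
rewrite big_mkord; have /= h := subrXX B A n.+1.
rewrite -[RHS]opprB h; ring.
Qed.

Lemma sumT n : (A - B) * \sum_(0 <= j < n.+1) ((A + B) / 2) ^+ j * (A ^+ (n - j) + B ^+ (n - j))
   = 2 * (A ^+ n.+1 - B ^+ n.+1).
Proof.
elim: n => [|n IH].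
  rewrite big_nat1 expr0 mul1r subnn !expr0 !expr1. by field.
rewrite big_nat_recl // expr0 mul1r subn0.
under eq_big_nat => j /andP[_ hj] do rewrite subSS exprS -mulrA.
rewrite -big_distrr /= mulrDr mulrCA IH !exprS.
by field.
Qed.
End Sums.

Lemma fib_pos n : (0 <= (fib_pair n).1) && (0 < (fib_pair n).2).
Proof.
elim: n => [|n /andP[h1 h2]] //=.
by rewrite (ltW h2) /= ltr_wpDl.
Qed.

Lemma fibz_neq0 r : r != 0 -> fibz r != 0.
Proof.
have hf : forall n, fibn n.+1 != 0.
  by move=> n; rewrite /fibn /=; case/andP: (fib_pos n) => _ h; rewrite gt_eqF.
case: r => [[|n]|n] // _ /=; first exact: hf.
by rewrite mulf_neq0 ?signr_eq0.
Qed.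

Unset Implicit Arguments.

Lemma zexp_helper (F : fieldType) (x : F) (n j : nat) : x != 0 -> (j <= n)%N ->
  x ^ (n%:Z - 2 * j%:Z) * x ^+ j = x ^+ (n - j).
Proof.
move=> hx hj.
have -> : x ^+ j = x ^ (j%:Z) by [].
rewrite -expfzDr //.
have -> : n%:Z - 2 * j%:Z + j%:Z = (n - j)%N by rewrite -subzn //; ring.
by [].
Qed.

Theorem theorem1 (r : int) (n : nat) : r != 0 ->
  (\sum_(0 <= j < n.+1) (-1 : rat) ^ (r * j%:Z) * (lucz (r * (n%:Z - 2 * j%:Z)))%:~R
    = \sum_(0 <= j < n.+1) ((lucz r)%:~R / 2) ^+ j * (lucz (r * (n%:Z - j%:Z)))%:~R)
  /\
  (\sum_(0 <= j < n.+1) ((lucz r)%:~R / 2) ^+ j * (lucz (r * (n%:Z - j%:Z)))%:~R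
    = 2 * (fibz (r * (n%:Z + 1)))%:~R / (fibz r)%:~R :> rat).
Proof.
move=> r0.
pose sq : algC := sqrtC 5.
have h2 : (2 : algC) != 0 by rewrite pnatr_eq0.
have h4 : (4 : algC) != 0 by rewrite pnatr_eq0.
have sq0 : sq != 0 by rewrite sqrtC_eq0 pnatr_eq0.
have sq2 : sq ^+ 2 = 5 by rewrite sqrtCK.
pose al : algC := (1 + sq) / 2.
pose be : algC := (1 - sq) / 2.
have Hs : al - be = sq by rewrite /al /be; field.
have Hab : al * be = -1.
  transitivity ((1 - sq ^+ 2) / 4); first by rewrite /al /be; field.
  by rewrite sq2; field.
have Ha2 : al ^+ 2 = al + 1.
  transitivity ((1 + 2 * sq + sq ^+ 2) / 4); first by rewrite /al; field.
  by rewrite sq2 /al; field.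
have Hb2 : be ^+ 2 = be + 1.
  transitivity ((1 - 2 * sq + sq ^+ 2) / 4); first by rewrite /be; field.
  by rewrite sq2 /be; field.
have La := @lucz_binet _ al be sq Hs sq0 Hab Ha2 Hb2.
have Fa := @fibz_binet _ al be sq Hs Hab Ha2 Hb2.
have a0 := @al0 _ al be Hab. have b0 := @be0 _ al be Hab.
pose A := al ^ r. pose B := be ^ r.
have A0 : A != 0 by rewrite expfz_neq0.
have B0 : B != 0 by rewrite expfz_neq0.
have Lk : forall k : int, (lucz (r * k))%:~R = A ^ k + B ^ k.
  by move=> k; rewrite La /A /B !exprz_exp.
have Fk : forall k : int, (fibz (r * k))%:~R * sq = A ^ k - B ^ k.
  by move=> k; rewrite Fa /A /B !exprz_exp.
have Fr : (fibz r)%:~R * sq = A - B by rewrite Fa.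
have fr0 : ((fibz r)%:~R : algC) != 0 by rewrite intr_eq0 fibz_neq0.
have AB0 : A - B != 0 by rewrite -Fr mulf_neq0.
pose H := (A ^+ n.+1 - B ^+ n.+1) / (A - B).
set X := \sum_(0 <= j < n.+1) _.
set Y := \sum_(0 <= j < n.+1) _.
set Z := _ / _.
have HX : ratr X = 2 * H :> algC.
  rewrite /X rmorph_sum /=.
  under eq_big_nat => j /andP[_ hj].
    rewrite rmorphM /= rmorphXz ?unitrN1 // rmorphN1 -Hab exprzMl ?unitfE //.
    rewrite -!exprz_exp ratr_int Lk -/A -/B.
    have -> : A ^ (j%:Z) = A ^+ j by [].
    have -> : B ^ (j%:Z) = B ^+ j by [].
    rewrite (_ : A ^+ j * B ^+ j * (A ^ (n%:Z - 2 * j%:Z) + B ^ (n%:Z - 2 * j%:Z))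
       = A ^+ (n - j) * B ^+ j + B ^+ (n - j) * A ^+ j); last first.
      rewrite -(zexp_helper _ _ n j A0 hj) -(zexp_helper _ _ n j B0 hj); ring.
    over.
  rewrite big_split /=.
  apply: (mulfI AB0); rewrite mulrDr sumH sumH' /H; by field.
have HY : ratr Y = 2 * H :> algC.
  have Lr : ((lucz r)%:~R : algC) = A + B by have := Lk 1; rewrite mulr1.
  rewrite /Y rmorph_sum /=.
  under eq_big_nat => j /andP[_ hj].
    rewrite rmorphM rmorphXn /= rmorphM /= fmorphV /= ratr_int rmorph_nat.
    rewrite Lr ratr_int Lk subzn //.
    over.
  apply: (mulfI AB0); rewrite sumT // /H; by field.
have HZ : ratr Z = 2 * H :> algC.
  rewrite /Z !rmorphM /= fmorphV /= rmorph_nat !ratr_int.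
  have -> : n%:Z + 1 = (n.+1)%:Z by rewrite -addn1 PoszD.
  have e1 : (fibz (r * n.+1))%:~R = (A ^+ n.+1 - B ^+ n.+1) / sq.
    by rewrite (_ : A ^+ n.+1 - B ^+ n.+1 = A ^ (n.+1)%:Z - B ^ (n.+1)%:Z) // -Fk; field.
  have e2 : ((fibz r)%:~R : algC) = (A - B) / sq by rewrite -Fr; field.
  rewrite e1 e2 /H; field.
  by rewrite AB0 sq0.
have injr : injective (@ratr algC) by apply: fmorph_inj.
split; apply: injr; by rewrite ?HX ?HY ?HZ.
Qed.
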